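(* Let $G=(V,E)$ be an undirected graph, let $X\subset V$ be connected with $\mathrm{width}(X)=+\infty$, $Y=V\setminus X$, $f\in L^\infty(X)$ with $\sup_X f<0$, and $g\in L^\infty(Y)$. Then the problem \[ \begin{cases}\Delta_\infty u(x)=f(x), & x\in X,\\ u(x)=g(x), & x\in Y,\end{cases} \] admits no bounded solution $u:V\to\mathbb{R}$.
   Context: For $x,y\in V$ write $x\sim y$ if $\{x,y\}\in E$. The combinatorial distance $d(A,B)$ between vertex sets is the infimum of the lengths of paths joining them; $\partial X=\{y\notin X:\ y\sim x\text{ for some }x\in X\}$ and $\mathrm{width}(X)=\sup_{x\in X}d(\partial X,x)$. The discrete infinity Laplacian is $\Delta_\infty u(x)=\inf_{y\sim x}u(y)+\sup_{y\sim x}u(y)-2u(x)$. *)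

(* Defs.v *)
From HB Require Import structures.
From mathcomp Require Import all_boot all_order all_algebra.
From mathcomp Require Import all_classical all_reals.
Set Implicit Arguments. Unset Strict Implicit. Unset Printing Implicit Defensive.
Import Order.TTheory GRing.Theory Num.Theory.
Local Open Scope classical_set_scope.
Local Open Scope ring_scope.

Definition undirected (V : Type) (E : V -> V -> Prop) : Prop :=
  (forall x y, E x y -> E y x) /\ (forall x, ~ E x x).

Inductive walk (V : Type) (R : V -> V -> Prop) : V -> V -> nat -> Prop :=
| walk0 x : walk R x x 0
| walkS x y z n : R x y -> walk R y z n -> walk R x z n.+1.

Definition connected_set (V : Type) (E : V -> V -> Prop) (X : set V) : Prop :=
  forall x y, X x -> X y ->
    exists n, walk (fun a b => [/\ E a b, X a & X b]) x y n.

Definition boundary (V : Type) (E : V -> V -> Prop) (X : set V) : set V :=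
  [set y | ~ X y /\ exists x, X x /\ E y x].

(* d(A, x) >= n : every path joining A and x has length at least n
   (d is the infimum of path lengths, +oo if there is none). *)
Definition dist_ge (V : Type) (E : V -> V -> Prop) (A : set V) (x : V)
  (n : nat) : Prop :=
  forall a m, A a -> walk E a x m -> (n <= m)%N.

Definition infinite_width (V : Type) (E : V -> V -> Prop) (X : set V) : Prop :=
  forall n : nat, exists x, X x /\ dist_ge E (boundary E X) x n.

Definition inf_laplacian (R : realType) (V : Type) (E : V -> V -> Prop)
  (u : V -> R) (x : V) : R :=
  inf [set u y | y in [set y | E x y]] + sup [set u y | y in [set y | E x y]]
  - 2 * u x.

Definition bounded_on (R : realType) (V : Type) (A : set V) (h : V -> R) : Prop :=
  exists M : R, forall x, A x -> `|h x| <= M.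

(* Main.v *)
Require Import Defs.
From HB Require Import structures.
From mathcomp Require Import all_boot all_order all_algebra.
From mathcomp Require Import all_classical all_reals.
From mathcomp Require Import lra.
Import Order.TTheory GRing.Theory Num.Theory.
Local Open Scope classical_set_scope.
Local Open Scope ring_scope.

Theorem proposition4p1 (R : realType) (V : Type) (E : V -> V -> Prop)
  (X : set V) (f g : V -> R) :
  undirected E ->
  (forall x, X x -> exists y, E x y) ->
  connected_set E X ->
  infinite_width E X ->
  bounded_on X f ->
  sup [set f x | x in X] < 0 ->
  bounded_on (~` X) g ->
  ~ exists u : V -> R,
      bounded_on setT u /\
      (forall x, X x -> inf_laplacian E u x = f x) /\
      (forall y, (~` X) y -> u y = g y).
Proof.
move=> [Esym _] Hnb _ Hw [Mf HMf] Hsup _ [u [[Mu HMu] [Hlap _]]].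
set c := - sup [set f x | x in X].
have c0 : 0 < c by rewrite /c oppr_gt0.
have Hub : forall x, X x -> f x <= - c.
  move=> x Xx; rewrite /c opprK; apply: ub_le_sup; last by exists x.
  exists Mf => _ [y Xy <-]; exact: le_trans (ler_norm _) (HMf y Xy).
have Hu : forall x, - Mu <= u x <= Mu.
  by move=> x; rewrite -ler_norml; apply: HMu.
have step : forall x, X x -> exists y, E x y /\ u y + c / 4 < u x.
  move=> x Xx; set S := [set u y | y in [set y | E x y]].
  have [z Ez] := Hnb x Xx.
  have Sne : S !=set0 by exists (u z); exists z.
  have lbS : has_lbound S.
    by exists (- Mu) => _ [y _ <-]; case/andP: (Hu y).
  have ubS : has_ubound S.
    by exists Mu => _ [y _ <-]; case/andP: (Hu y).
  have h1 : inf S <= u z by apply: ge_inf => //; exists z.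
  have h2 : u z <= sup S by apply: ub_le_sup => //; exists z.
  have hl := Hlap x Xx; rewrite /inf_laplacian -/S in hl.
  have hf := Hub x Xx.
  have c4 : 0 < c / 4 by lra.
  have [e [y Ey <-] He] := inf_adherent c4 (conj Sne lbS).
  exists y; split => //; lra.
pose N := (Num.truncn (8 * Mu / c)).+1.
have HN : 8 * Mu < N%:R * c.
  rewrite -ltr_pdivrMr //; exact: truncnS_gt.
have [x0 [Xx0 Hd]] := Hw N.+1.
have Q : forall k, (k <= N)%N -> exists y, [/\ X y, walk E y x0 k &
    k%:R * (c / 4) <= u x0 - u y].
  elim=> [_|k IH hk].
    by exists x0; split => //; [exact: walk0 | rewrite mul0r subrr].
  have [y [Xy wy hy]] := IH (ltnW hk).
  have [y' [Eyy' hy']] := step y Xy.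
  have w' : walk E y' x0 k.+1 by apply: walkS (Esym _ _ Eyy') wy.
  exists y'; split => //.
    apply: contrapT => nX.
    have := Hd y' k.+1 (conj nX (ex_intro _ y (conj Xy (Esym _ _ Eyy')))) w'.
    by rewrite ltnS leqNgt hk.
  rewrite -natr1; lra.
have [y [_ _ hy]] := Q N (leqnn N).
have := Hu x0; have := Hu y; move=> /andP[? ?] /andP[? ?].
lra.
Qed.
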